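(* Let $P,Q$ be $n\times n$ stochastic matrices. For every $\delta>0$ and every $s\in\{0,1,\dots,n\}$, $$\Phi_{PQ}(s)\le\Phi_P\big(\delta\,\Phi_Q(s)\big)+\frac{n}{\delta}.$$
   Context: A matrix is stochastic if it is entrywise nonnegative with all row sums equal to $1$. For an $n\times n$ stochastic matrix $P$, the maximum one-time influence function is defined by $\Phi_P(0)=0$ and, for $s\in\{1,\dots,n\}$, $\Phi_P(s)=\max_{\mathcal{B}\subseteq\{1,\dots,n\},\,|\mathcal{B}|=s}\sum_{i=1}^n\sum_{j\in\mathcal{B}}P_{ij}$. It is extended to real arguments $x\ge0$ by $\Phi_P(x)=\Phi_P(\min(\lfloor x\rfloor,n))$. *)

(* Defs.v *)
From mathcomp Require Import all_boot all_order all_algebra.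
Set Implicit Arguments. Unset Strict Implicit. Unset Printing Implicit Defensive.
Import Order.TTheory GRing.Theory Num.Theory.
Local Open Scope ring_scope.

Definition stochastic (R : numDomainType) (n : nat) (P : 'M[R]_n) : Prop :=
  (forall i j, 0 <= P i j) /\ (forall i, \sum_(j < n) P i j = 1).

(* Maximum one-time influence function on integer arguments:
   Phi_P(s) = max over B with |B| = min(s,n) of sum_i sum_{j in B} P i j.
   (Phi_P(0) = 0 automatically: the only set of size 0 is empty.)
   The max over the nonempty finite family is taken with Num.max starting
   from 0; since all sums are >= 0 for stochastic P this is the true max. *)
Definition Phi_nat (R : realDomainType) (n : nat) (P : 'M[R]_n) (s : nat) : R :=
  \big[Num.max/0]_(B : {set 'I_n} | #|B| == minn s n)
     \sum_(i < n) \sum_(j in B) P i j.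

Definition Phi (R : archiRealFieldType) (n : nat) (P : 'M[R]_n) (x : R) : R :=
  Phi_nat P (minn (Num.truncn x) n).

(* Main.v *)
Require Import Defs.
From mathcomp Require Import all_boot all_order all_algebra.
Import Order.TTheory GRing.Theory Num.Theory.
Local Open Scope ring_scope.

Section Aux.
Variable R : realDomainType.

Lemma bigmax_ge (I : eqType) (r : seq I) (Pr : pred I) (F : I -> R) x :
  x \in r -> Pr x -> F x <= \big[Num.max/0]_(i <- r | Pr i) F i.
Proof.
elim: r => [//|y r IH]; rewrite in_cons big_cons => /orP [/eqP <- Px|xr Px].
  by rewrite Px le_max lexx.
case: (Pr y); last exact: IH.
by rewrite le_max (IH xr Px) orbT.
Qed.

Lemma bigmax_le (I : finType) (Pr : pred I) (F : I -> R) M :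
  0 <= M -> (forall i, Pr i -> F i <= M) -> \big[Num.max/0]_(i | Pr i) F i <= M.
Proof.
move=> M0 H; apply: (big_ind (fun x => x <= M)) => //.
  by move=> x y hx hy; rewrite ge_max hx hy.
Qed.

Lemma Phi_nat_ge n (P : 'M[R]_n) s (B : {set 'I_n}) :
  #|B| = minn s n -> \sum_(i < n) \sum_(j in B) P i j <= Phi_nat P s.
Proof.
move=> hB; rewrite /Phi_nat.
refine (@bigmax_ge _ (index_enum _) (fun B : {set 'I_n} => #|B| == minn s n) ( fun B : {set 'I_n} => \sum_(i < n) \sum_(j in B) P i j) B _ _).
  by rewrite mem_index_enum.
by rewrite hB.
Qed.

Lemma extend_set n (A : {set 'I_n}) t : (#|A| <= t <= n)%N ->
  exists A' : {set 'I_n}, A \subset A' /\ #|A'| = t.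
Proof.
move=> /andP [hA ht]; move: A hA.
elim: t ht => [|t IH] ht A hA.
  by exists A; split => //; apply/eqP; rewrite -leqn0.
case: (ltnP #|A| t.+1) => h; last first.
  exists A; split => //; apply/eqP; by rewrite eqn_leq hA h.
have [A' [sA cA]] := IH (ltnW ht) A h.
have : (0 < #|~: A'|)%N by rewrite cardsCs setCK card_ord cA subn_gt0.
move=> /card_gt0P [x]; rewrite in_setC => xA.
exists (x |: A'); split.
  by apply: subset_trans sA (subsetUr _ _).
by rewrite cardsU1 xA cA.
Qed.

End Aux.

Theorem lemma5 (R : archiRealFieldType) (n : nat) (P Q : 'M[R]_n)
  (hP : stochastic P) (hQ : stochastic Q) (delta : R) (hdelta : 0 < delta)
  (s : nat) (hs : (s <= n)%N) :
  Phi_nat (P *m Q) s <= Phi P (delta * Phi_nat Q s) + n%:R / delta.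
Proof.
case: hP => P0 P1; case: hQ => Q0 Q1.
set m := Phi_nat Q s.
set t := minn (Num.truncn (delta * m)) n.
have Phi_nn : forall (M : 'M[R]_n) u, (forall i j, 0 <= M i j) -> 0 <= Phi_nat M u.
  move=> M u M0; rewrite /Phi_nat; apply: (big_ind (fun x => 0 <= x)) => //.
  by move=> x y hx _; rewrite le_max hx.
  by move=> B _; apply: sumr_ge0 => i _; apply: sumr_ge0.
have m0 : 0 <= m by apply: Phi_nn.
have rhs0 : 0 <= Phi P (delta * m) + n%:R / delta.
  by rewrite addr_ge0 ?(Phi_nn P) // divr_ge0 // ltW.
apply: bigmax_le => // B /eqP hB.
set c := fun k => \sum_(i < n) P i k.
set q := fun k => \sum_(j in B) Q k j.
have c0 k : 0 <= c k by apply: sumr_ge0 => i _.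
have q0 k : 0 <= q k by apply: sumr_ge0 => i _.
have q1 k : q k <= 1.
  rewrite -(Q1 k) /q [X in _ <= X](bigID (fun j => j \in B)) /= lerDl.
  by apply: sumr_ge0.
have csum : \sum_k c k = n%:R.
  rewrite /c exchange_big /= (eq_bigr (fun _ => 1)) ?sumr_const ?card_ord //.
have hE : \sum_(i < n) \sum_(j in B) (P *m Q) i j = \sum_k c k * q k.
  rewrite (eq_bigr (fun i => \sum_k P i k * q k)); last first.
    move=> i _; rewrite (eq_bigr (fun j => \sum_k P i k * Q k j)); last by move=> j _; rewrite mxE.
    rewrite exchange_big /=; apply: eq_bigr => k _; by rewrite /q mulr_sumr.
  rewrite exchange_big /=; apply: eq_bigr => k _; by rewrite /c mulr_suml.
have qsum : \sum_k q k <= m.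
  rewrite /q; exact: Phi_nat_ge.
set A := [set k | 1 <= delta * q k].
have cardA : (#|A| <= t)%N.
  rewrite leq_min; apply/andP; split; last by rewrite (leq_trans (max_card _)) ?card_ord.
  rewrite truncn_ge_nat; last first.
    by rewrite mulr_ge0 // ltW.
  apply: (le_trans _ (ler_wpM2l (ltW hdelta) qsum)).
  rewrite mulr_sumr (bigID (fun k => k \in A)) /= -[#|A|%:R]addr0.
  apply: lerD; last by apply: sumr_ge0 => k _; rewrite mulr_ge0 // ltW.
  rewrite -sum1_card natr_sum; apply: ler_sum => k; by rewrite inE.
have [A' [sA cA']] : exists A' : {set 'I_n}, A \subset A' /\ #|A'| = t.
  by apply: extend_set; rewrite cardA geq_minr.
rewrite hE (bigID (fun k => k \in A)) /=.
apply: lerD.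
  apply: (@le_trans _ _ ( \sum_(k in A') c k)).
    apply: (@le_trans _ _ ( \sum_(k in A) c k)).
      by apply: ler_sum => k _; rewrite ler_piMr.
    rewrite [X in _ <= X](big_setID A) /= (setIidPr sA) lerDl.
    by apply: sumr_ge0.
  rewrite /c exchange_big /= /Phi; apply: Phi_nat_ge.
  by rewrite cA' /t -minnA minnn.
apply: (@le_trans _ _ ( \sum_(k | k \notin A) c k / delta)).
  apply: ler_sum => k; rewrite inE -ltNge => hk.
  apply: ler_wpM2l => //; rewrite -(mulr1 delta^-1) ler_pdivlMl //; exact: ltW.
rewrite -csum mulr_suml [X in _ <= X](bigID (fun k => k \notin A)) /= lerDl.
by apply: sumr_ge0 => k _; rewrite divr_ge0 // ltW.
Qed.
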